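(* Let $\mathfrak{R}$ be an alternative ring with a nontrivial idempotent $e_1$ and Peirce decomposition $\mathfrak{R}=\mathfrak{R}_{11}\oplus\mathfrak{R}_{12}\oplus\mathfrak{R}_{21}\oplus\mathfrak{R}_{22}$, satisfying: (i) if $a_{11}\in\mathfrak{R}_{11}$, $a_{22}\in\mathfrak{R}_{22}$ and $[a_{11}+a_{22},\mathfrak{R}_{12}]=0$, then $a_{11}+a_{22}\in\mathcal{Z}(\mathfrak{R})$; (ii) if $a_{11}\in\mathfrak{R}_{11}$, $a_{22}\in\mathfrak{R}_{22}$ and $[a_{11}+a_{22},\mathfrak{R}_{21}]=0$, then $a_{11}+a_{22}\in\mathcal{Z}(\mathfrak{R})$. Let $\mathcal{D}$ be a multiplicative Lie-type derivation of $\mathfrak{R}$. Then for $i\in\{1,2\}$ and any $a_{ii},b_{ii}\in\mathfrak{R}_{ii}$ there exists $z_{a_{ii},b_{ii}}\in\mathcal{Z}(\mathfrak{R})$ such that $\mathcal{D}(a_{ii}+b_{ii})=\mathcal{D}(a_{ii})+\mathcal{D}(b_{ii})+z_{a_{ii},b_{ii}}$.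
   Context: Rings are not assumed associative or unital. The associator is $(x,y,z)=(xy)z-x(yz)$; $\mathfrak{R}$ is alternative if $(x,x,y)=0=(y,x,x)$ for all $x,y$. $[x,y]=xy-yx$ and $\mathcal{Z}(\mathfrak{R})=\{r: [r,x]=0\ \forall x\in\mathfrak{R}\}$. Define $p_1(x)=x$, $p_n(x_1,\dots,x_n)=[p_{n-1}(x_1,\dots,x_{n-1}),x_n]$. For $n\ge2$, a (not necessarily additive) map $\mathcal{D}\colon\mathfrak{R}\to\mathfrak{R}$ is a multiplicative Lie $n$-derivation if $\mathcal{D}(p_n(x_1,\dots,x_n))=\sum_{i=1}^n p_n(x_1,\dots,\mathcal{D}(x_i),\dots,x_n)$ for all $x_i\in\mathfrak{R}$; a multiplicative Lie-type derivation is a multiplicative Lie $n$-derivation for some $n\ge2$. A nontrivial idempotent is $e_1\ne0$ with $e_1^2=e_1$ which is not a multiplicative identity. With $e_2a:=a-e_1a$, $ae_2:=a-ae_1$, set $\mathfrak{R}_{ij}=e_i\mathfrak{R}e_j$ ($i,j=1,2$), so $\mathfrak{R}=\bigoplus_{i,j}\mathfrak{R}_{ij}$. *)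

(* Defs.v *)
From mathcomp Require Import all_boot all_algebra.
Set Implicit Arguments. Unset Strict Implicit. Unset Printing Implicit Defensive.
Import GRing.Theory.
Local Open Scope ring_scope.

Definition is_nonassoc_ring (V : zmodType) (mul : V -> V -> V) : Prop :=
  (forall x y z, mul (x + y) z = mul x z + mul y z) /\
  (forall x y z, mul x (y + z) = mul x y + mul x z).

Definition assoc (V : zmodType) (mul : V -> V -> V) (x y z : V) : V :=
  mul (mul x y) z - mul x (mul y z).

Definition alternative (V : zmodType) (mul : V -> V -> V) : Prop :=
  forall x y, assoc mul x x y = 0 /\ assoc mul y x x = 0.

Definition commutator (V : zmodType) (mul : V -> V -> V) (x y : V) : V :=
  mul x y - mul y x.

Definition center (V : zmodType) (mul : V -> V -> V) (r : V) : Prop :=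
  forall x, commutator mul r x = 0.

(* p_1(x) = x, p_n(x_1,...,x_n) = [p_{n-1}(x_1,...,x_{n-1}), x_n].
   p_seq acc [:: y_1; ...; y_k] = [...[[acc, y_1], y_2], ..., y_k]. *)
Fixpoint p_seq (V : zmodType) (mul : V -> V -> V) (acc : V) (xs : seq V) : V :=
  match xs with
  | [::] => acc
  | y :: ys => p_seq mul (commutator mul acc y) ys
  end.

(* p_n (x_1,...,x_n) for x : 'I_n -> V (x_1 is x at index 0); p_0 := 0 (unused). *)
Definition p_n (V : zmodType) (mul : V -> V -> V) (n : nat) (x : 'I_n -> V) : V :=
  match [seq x i | i <- enum 'I_n] with
  | [::] => 0
  | x1 :: xs => p_seq mul x1 xs
  end.

Definition lie_n_derivation (V : zmodType) (mul : V -> V -> V) (n : nat)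
  (D : V -> V) : Prop :=
  forall x : 'I_n -> V,
    D (p_n mul x) =
    \sum_(i < n) p_n mul (fun j => if j == i then D (x j) else x j).

Definition lie_type_derivation (V : zmodType) (mul : V -> V -> V) (D : V -> V) : Prop :=
  exists n : nat, (2 <= n)%N /\ lie_n_derivation mul n D.

Definition nontrivial_idempotent (V : zmodType) (mul : V -> V -> V) (e : V) : Prop :=
  e <> 0 /\ mul e e = e /\ ~ (forall x, mul e x = x /\ mul x e = x).

(* Peirce components: e_i a with e_2 a := a - e_1 a, a e_2 := a - a e_1 *)
Definition lmul_e (V : zmodType) (mul : V -> V -> V) (e : V) (i : bool) (a : V) : V :=
  if i then mul e a else a - mul e a.
Definition rmul_e (V : zmodType) (mul : V -> V -> V) (e : V) (j : bool) (a : V) : V :=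
  if j then mul a e else a - mul a e.

(* x \in R_ij  (index true = 1, false = 2);  R_ij = (e_i R) e_j *)
Definition peirce (V : zmodType) (mul : V -> V -> V) (e : V) (i j : bool) (x : V) : Prop :=
  exists a, x = rmul_e mul e j (lmul_e mul e i a).

(* Main.v *)
Require Import Defs.
From mathcomp Require Import all_boot all_algebra.
Set Implicit Arguments. Unset Strict Implicit. Unset Printing Implicit Defensive.
Import GRing.Theory.
Local Open Scope ring_scope.

Section Alt.
Variable V : zmodType.
Variable mul : V -> V -> V.
Hypothesis Hring : is_nonassoc_ring mul.
Hypothesis Halt : alternative mul.
Variable e : V.
Hypothesis He : mul e e = e.

Local Notation "x ** y" := (mul x y) (at level 40, left associativity).
Local Notation as_ := (assoc mul).
Local Notation cm := (commutator mul).

Lemma mulDl x y z : (x + y) ** z = x ** z + y ** z.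
Proof. by case: Hring. Qed.
Lemma mulDr x y z : x ** (y + z) = x ** y + x ** z.
Proof. by case: Hring. Qed.
Lemma mul0l x : 0 ** x = 0.
Proof. by apply: (@addrI _ (0 ** x)); rewrite -mulDl !addr0. Qed.
Lemma mul0r x : x ** 0 = 0.
Proof. by apply: (@addrI _ (x ** 0)); rewrite -mulDr !addr0. Qed.
Lemma mulNl x y : (- x) ** y = - (x ** y).
Proof. by apply: (@addrI _ (x ** y)); rewrite -mulDl !subrr mul0l. Qed.
Lemma mulNr x y : x ** (- y) = - (x ** y).
Proof. by apply: (@addrI _ (x ** y)); rewrite -mulDr !subrr mul0r. Qed.
Lemma mulBl x y z : (x - y) ** z = x ** z - y ** z.
Proof. by rewrite mulDl mulNl. Qed.
Lemma mulBr x y z : x ** (y - z) = x ** y - x ** z.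
Proof. by rewrite mulDr mulNr. Qed.

Lemma asDl x y z w : as_ (x + y) z w = as_ x z w + as_ y z w.
Proof. by rewrite /assoc !mulDl opprD addrACA. Qed.
Lemma asDm x y z w : as_ x (y + z) w = as_ x y w + as_ x z w.
Proof. by rewrite /assoc mulDr !mulDl mulDr opprD addrACA. Qed.
Lemma asDr x y z w : as_ x y (z + w) = as_ x y z + as_ x y w.
Proof. by rewrite /assoc !mulDr opprD addrACA. Qed.

Lemma as_skew12 x y z : as_ x y z = - as_ y x z.
Proof.
have := (Halt (x + y) z).1. rewrite !asDl !asDm (Halt x z).1 (Halt y z).1 add0r addr0.
by move/eqP; rewrite addr_eq0 => /eqP.
Qed.
Lemma as_skew23 x y z : as_ x y z = - as_ x z y.
Proof.
have := (Halt (y + z) x).2. rewrite !asDr !asDm (Halt y x).2 (Halt z x).2 add0r addr0 addrC.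
by move/eqP; rewrite addr_eq0 => /eqP.
Qed.
Lemma as_cyc x y z : as_ x y z = as_ z x y.
Proof. by rewrite [LHS]as_skew23 [as_ x z y]as_skew12 opprK. Qed.
Lemma as_flex x y : as_ x y x = 0.
Proof. by rewrite as_skew12 (Halt x y).2 oppr0. Qed.


Lemma decomp3 (X a b : V) : X = a + b + (X - a - b).
Proof. rewrite addrC -[X - a - b]addrA -opprD. by rewrite subrK. Qed.

Lemma addr_eqr (a b : V) : a = a + b -> b = 0.
Proof. by move=> h; apply: (@addrI _ a); rewrite addr0 -h. Qed.

Definition P11 x := e ** x = x /\ x ** e = x.
Definition P12 x := e ** x = x /\ x ** e = 0.
Definition P21 x := e ** x = 0 /\ x ** e = x.
Definition P22 x := e ** x = 0 /\ x ** e = 0.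
Definition Pd x := x ** e = e ** x.

Lemma oppr0_eq (a : V) : - a = 0 -> a = 0.
Proof. by move/eqP; rewrite oppr_eq0 => /eqP. Qed.
Lemma subr_eql (a b : V) : a - b = a -> b = 0.
Proof. by move=> h; apply: oppr0_eq; apply: (@addrI _ a); rewrite h addr0. Qed.
Lemma subr_eq0' (a b : V) : a - b = 0 -> a = b.
Proof. by move/eqP; rewrite subr_eq0 => /eqP. Qed.

Lemma m12_11 x t : P12 x -> P11 t -> x ** t = 0.
Proof.
case=> ex xe [et te].
have h1 : as_ t e x = 0 by rewrite /assoc te ex subrr.
have h2 : as_ x e t = - (x ** t) by rewrite /assoc xe mul0l et sub0r.
have h3 : as_ e x t = x ** t - e ** (x ** t) by rewrite /assoc ex.
have h4 : e ** (x ** t) = 0.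
  by apply: (@subr_eql (x ** t)); rewrite -h3 as_skew12 h2 opprK.
have h5 : as_ e x t = 0 by rewrite as_cyc h1.
by rewrite h3 h4 subr0 in h5.
Qed.

Lemma m11_12 t x : P11 t -> P12 x -> P12 (t ** x).
Proof.
case=> et te [ex xe].
have h1 : as_ t e x = 0 by rewrite /assoc te ex subrr.
have h3 : as_ e t x = t ** x - e ** (t ** x) by rewrite /assoc et.
have h4 : as_ t x e = (t ** x) ** e by rewrite /assoc xe mul0r subr0.
split.
  by apply/esym/subr_eq0'; rewrite -h3 as_skew12 h1 oppr0.
by rewrite -h4; apply: oppr0_eq; rewrite -as_skew23.
Qed.

Lemma m22_12 s x : P22 s -> P12 x -> s ** x = 0.
Proof.
case=> es se [ex xe].
have h1 : as_ x e s = 0 by rewrite /assoc xe es mul0l mul0r subrr.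
have h2 : as_ s e x = - (s ** x) by rewrite /assoc se ex mul0l sub0r.
by apply: oppr0_eq; rewrite -h2 -as_cyc as_skew12 h1 oppr0.
Qed.

Lemma m12_22 x s : P12 x -> P22 s -> P12 (x ** s).
Proof.
case=> ex xe [es se].
have h1 : as_ x e s = 0 by rewrite /assoc xe es mul0l mul0r subrr.
have h3 : as_ e x s = x ** s - e ** (x ** s) by rewrite /assoc ex.
have h4 : as_ x s e = (x ** s) ** e by rewrite /assoc se mul0r subr0.
split.
  by apply/esym/subr_eq0'; rewrite -h3 as_skew12 h1 oppr0.
by rewrite -h4; apply: oppr0_eq; rewrite -as_skew23.
Qed.

Lemma m11_21 t x : P11 t -> P21 x -> t ** x = 0.
Proof.
case=> et te [ex xe].
have h0 : as_ x e t = 0 by rewrite /assoc xe et subrr.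
have h1 : as_ e t x = t ** x - e ** (t ** x) by rewrite /assoc et.
have h2 : as_ t e x = t ** x by rewrite /assoc te ex mul0r subr0.
have h3 : e ** (t ** x) = t ** x by apply/esym/subr_eq0'; rewrite -h1 as_cyc h0.
by apply: oppr0_eq; rewrite -h2 -as_skew12 h1 h3 subrr.
Qed.

Lemma m21_11 x t : P21 x -> P11 t -> P21 (x ** t).
Proof.
case=> ex xe [et te].
have h0 : as_ x e t = 0 by rewrite /assoc xe et subrr.
have h1 : as_ x t e = (x ** t) ** e - x ** t by rewrite /assoc te.
have h2 : as_ e x t = - (e ** (x ** t)) by rewrite /assoc ex mul0l sub0r.
split.
  by apply: oppr0_eq; rewrite -h2 as_skew12 h0 oppr0.
by apply: subr_eq0'; rewrite -h1 as_skew23 h0 oppr0.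
Qed.

Lemma m21_22 x s : P21 x -> P22 s -> x ** s = 0.
Proof.
case=> ex xe [es se].
have h0 : as_ s e x = 0 by rewrite /assoc se ex mul0l mul0r subrr.
have h1 : as_ e x s = - (e ** (x ** s)) by rewrite /assoc ex mul0l sub0r.
have h2 : as_ x e s = x ** s by rewrite /assoc xe es mul0r subr0.
have h3 : e ** (x ** s) = 0 by apply: oppr0_eq; rewrite -h1 as_cyc h0.
by apply: oppr0_eq; rewrite -h2 -as_skew12 h1 h3 oppr0.
Qed.

Lemma m22_21 s x : P22 s -> P21 x -> P21 (s ** x).
Proof.
case=> es se [ex xe].
have h0 : as_ s e x = 0 by rewrite /assoc se ex mul0l mul0r subrr.
have h1 : as_ s x e = (s ** x) ** e - s ** x by rewrite /assoc xe.
have h2 : as_ e s x = - (e ** (s ** x)) by rewrite /assoc es mul0l sub0r.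
split.
  by apply: oppr0_eq; rewrite -h2 as_skew12 h0 oppr0.
by apply: subr_eq0'; rewrite -h1 as_skew23 h0 oppr0.
Qed.

Lemma m12_21 u x : P12 u -> P21 x -> Pd (u ** x).
Proof.
case=> eu ue [ex xe].
have h0 : as_ u e x = 0 by rewrite /assoc ue ex mul0l mul0r subrr.
have h1 : as_ e u x = u ** x - e ** (u ** x) by rewrite /assoc eu.
have h2 : as_ u x e = (u ** x) ** e - u ** x by rewrite /assoc xe.
have h3 : e ** (u ** x) = u ** x by apply/esym/subr_eq0'; rewrite -h1 as_skew12 h0 oppr0.
have h4 : (u ** x) ** e = u ** x by apply: subr_eq0'; rewrite -h2 as_skew23 h0 oppr0.
by rewrite /Pd h3 h4.
Qed.

Lemma m21_12 x u : P21 x -> P12 u -> Pd (x ** u).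
Proof.
case=> ex xe [eu ue].
have h0 : as_ x e u = 0 by rewrite /assoc xe eu subrr.
have h1 : as_ e x u = - (e ** (x ** u)) by rewrite /assoc ex mul0l sub0r.
have h2 : as_ x u e = (x ** u) ** e by rewrite /assoc ue mul0r subr0.
have h3 : e ** (x ** u) = 0 by apply: oppr0_eq; rewrite -h1 as_skew12 h0 oppr0.
have h4 : (x ** u) ** e = 0 by rewrite -h2 as_skew23 h0 oppr0.
by rewrite /Pd h3 h4.
Qed.

Lemma sq12 x : P12 x -> x ** x = 0.
Proof.
case=> ex xe; apply: oppr0_eq.
by rewrite -(as_flex x e) /assoc xe ex mul0l sub0r.
Qed.


Lemma lalt z : e ** (e ** z) = e ** z.
Proof. by apply/esym/subr_eq0'; have := (Halt e z).1; rewrite /assoc He. Qed.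
Lemma ralt z : (z ** e) ** e = z ** e.
Proof. by apply: subr_eq0'; have := (Halt e z).2; rewrite /assoc He. Qed.
Lemma flexe z : (e ** z) ** e = e ** (z ** e).
Proof. by apply: subr_eq0'; rewrite -(as_flex e z). Qed.

Lemma P12D x y : P12 x -> P12 y -> P12 (x + y).
Proof. by case=> h1 h2 [h3 h4]; rewrite /P12 mulDl mulDr h1 h2 h3 h4 addr0. Qed.
Lemma P12N x : P12 x -> P12 (- x).
Proof. by case=> h1 h2; rewrite /P12 mulNl mulNr h1 h2 oppr0. Qed.
Lemma P21D x y : P21 x -> P21 y -> P21 (x + y).
Proof. by case=> h1 h2 [h3 h4]; rewrite /P21 mulDl mulDr h1 h2 h3 h4 addr0. Qed.
Lemma P21N x : P21 x -> P21 (- x).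
Proof. by case=> h1 h2; rewrite /P21 mulNl mulNr h1 h2 oppr0. Qed.
Lemma PdD x y : Pd x -> Pd y -> Pd (x + y).
Proof. by rewrite /Pd mulDl mulDr => -> ->. Qed.
Lemma PdN x : Pd x -> Pd (- x).
Proof. by rewrite /Pd mulNl mulNr => ->. Qed.
Lemma P11d t : P11 t -> Pd t.
Proof. by case=> h1 h2; rewrite /Pd h1 h2. Qed.
Lemma P22d t : P22 t -> Pd t.
Proof. by case=> h1 h2; rewrite /Pd h1 h2. Qed.

Lemma decomp T : Pd T -> P11 (e ** T) /\ P22 (T - e ** T).
Proof.
move=> hT; have h1 : (e ** T) ** e = e ** T by rewrite -hT ralt.
split; first by split; rewrite ?lalt.
by split; rewrite ?mulBr ?mulBl ?lalt ?h1 ?hT subrr.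
Qed.

Lemma cm_d12 T x : Pd T -> P12 x -> P12 (cm T x).
Proof.
move=> hT hx; have [h1 h2] := decomp hT.
set t1 := e ** T in h1 h2 *; set t2 := T - t1 in h2 *.
have -> : T = t1 + t2 by rewrite /t2 addrC subrK.
rewrite /commutator mulDl mulDr (m22_12 h2 hx) (m12_11 hx h1) addr0 add0r.
by apply: P12D; [apply: m11_12 | apply: P12N; apply: m12_22].
Qed.

Lemma cm_d21 T x : Pd T -> P21 x -> P21 (cm T x).
Proof.
move=> hT hx; have [h1 h2] := decomp hT.
set t1 := e ** T in h1 h2 *; set t2 := T - t1 in h2 *.
have -> : T = t1 + t2 by rewrite /t2 addrC subrK.
rewrite /commutator mulDl mulDr (m11_21 h1 hx) (m21_22 hx h2) addr0 add0r.
by apply: P21D; [apply: m22_21 | apply: P21N; apply: m21_11].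
Qed.

Lemma cm12_21 u x : P12 u -> P21 x -> Pd (cm u x).
Proof.
move=> hu hx; rewrite /commutator; apply: PdD; first exact: m12_21.
by apply: PdN; apply: m21_12.
Qed.

Lemma cmbxx b x : (P11 b \/ P22 b) -> P12 x -> cm (cm b x) x = 0.
Proof.
move=> hb hx; rewrite /commutator.
case: hb => hb.
  rewrite (m12_11 hx hb) subr0.
  have h1 : (b ** x) ** x = b ** (x ** x).
    by apply: subr_eq0'; have := (Halt x b).2.
  have h2 : (x ** b) ** x = x ** (b ** x).
    by apply: subr_eq0'; rewrite -(as_flex x b).
  by rewrite h1 -h2 (sq12 hx) (m12_11 hx hb) mul0r mul0l !subrr.
rewrite (m22_12 hb hx) sub0r mulNl mulNr.
have h1 : (x ** x) ** b = x ** (x ** b).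
  by apply: subr_eq0'; have := (Halt x b).1.
have h2 : (x ** b) ** x = x ** (b ** x).
  by apply: subr_eq0'; rewrite -(as_flex x b).
by rewrite h2 -h1 (sq12 hx) (m22_12 hb hx) mul0r mul0l oppr0 subrr.
Qed.

Lemma peirce11 x : peirce mul e true true x <-> P11 x.
Proof.
split.
  case=> a ->; rewrite /= /P11 ralt; split=> //.
  by rewrite flexe lalt -flexe.
by move=> [h1 h2]; exists x; rewrite /= h1 h2.
Qed.
Lemma peirce12 x : peirce mul e true false x <-> P12 x.
Proof.
split.
  case=> a ->; rewrite /= /P12 mulBr mulBl ralt subrr lalt; split=> //.
  by rewrite flexe lalt -flexe.
by move=> [h1 h2]; exists x; rewrite /= h1 h2 subr0.
Qed.
Lemma peirce21 x : peirce mul e false true x <-> P21 x.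
Proof.
split.
  case=> a ->; rewrite /= /P21 ralt; split=> //.
  by rewrite -flexe mulBr lalt subrr mul0l.
by move=> [h1 h2]; exists x; rewrite /= h1 subr0 h2.
Qed.
Lemma peirce22 x : peirce mul e false false x <-> P22 x.
Proof.
split.
  case=> a ->; rewrite /=.
  have : e ** (a - e ** a) = 0 by rewrite mulBr lalt subrr.
  move: (a - e ** a) => z ez.
  by rewrite /P22 mulBr mulBl ralt subrr -flexe ez mul0l subrr.
by move=> [h1 h2]; exists x; rewrite /= h1 !subr0 h2 subr0.
Qed.


Lemma cmDl x y z : cm (x + y) z = cm x z + cm y z.
Proof. by rewrite /commutator mulDl mulDr opprD addrACA. Qed.
Lemma cmDr x y z : cm x (y + z) = cm x y + cm x z.
Proof. by rewrite /commutator mulDl mulDr opprD addrACA. Qed.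
Lemma cmNl x y : cm (- x) y = - cm x y.
Proof. by rewrite /commutator mulNl mulNr opprB opprK addrC. Qed.
Lemma cmNr x y : cm x (- y) = - cm x y.
Proof. by rewrite /commutator mulNl mulNr opprB opprK addrC. Qed.
Lemma cm0l x : cm 0 x = 0.
Proof. by rewrite /commutator mul0l mul0r subrr. Qed.
Lemma cm0r x : cm x 0 = 0.
Proof. by rewrite /commutator mul0l mul0r subrr. Qed.
Lemma cm_center z y : center mul z -> cm y z = 0.
Proof. by move=> hz; rewrite /commutator -opprB -/(cm z y) hz oppr0. Qed.

Definition Am z := cm z e.
Lemma iterAD m x y : iter m Am (x + y) = iter m Am x + iter m Am y.
Proof. by elim: m => //= m ->; rewrite /Am cmDl. Qed.
Lemma iterAN m x : iter m Am (- x) = - iter m Am x.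
Proof. by elim: m => //= m ->; rewrite /Am cmNl. Qed.
Lemma iterA0 m : iter m Am 0 = 0.
Proof. by elim: m => //= m ->; rewrite /Am cm0l. Qed.
Lemma iterAB m x y : iter m Am (x - y) = iter m Am x - iter m Am y.
Proof. by rewrite iterAD iterAN. Qed.

Lemma Am12 p : P12 p -> Am p = - p.
Proof. by case=> h1 h2; rewrite /Am /commutator h1 h2 sub0r. Qed.
Lemma iterA12 m p : P12 p -> iter m Am p = if odd m then - p else p.
Proof.
move=> hp; elim: m => //= m ->.
by case: (odd m) => /=; rewrite ?/Am ?cmNl -/(Am p) Am12 ?opprK.
Qed.
Lemma iterA21 m q : P21 q -> iter m Am q = q.
Proof. by case=> h1 h2; elim: m => //= m ->; rewrite /Am /commutator h1 h2 subr0. Qed.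
Lemma iterAd m d : Pd d -> iter m.+1 Am d = 0.
Proof. by move=> hd; rewrite iterSr /Am /commutator hd subrr iterA0. Qed.

Lemma iterA12_eq0 m p : P12 p -> iter m Am p = 0 -> p = 0.
Proof. by move=> hp; rewrite iterA12 //; case: (odd m) => // /oppr0_eq. Qed.

Lemma F1 m W : iter m Am (cm W e) = 0 -> Pd W.
Proof.
set p := e ** W - (e ** W) ** e.
set q := W ** e - (e ** W) ** e.
have hp : P12 p.
  by split; rewrite /p ?mulBr ?mulBl ?lalt ?ralt ?subrr // flexe lalt -flexe.
have hq : P21 q.
  by split; rewrite /q ?mulBr ?mulBl ?ralt // flexe lalt subrr.
have hW : cm W e = q - p by rewrite /q /p /commutator opprB addrA subrK.
rewrite hW iterAB (iterA21 _ hq) => h.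
have h1 : e ** (q - iter m Am p) = 0 by rewrite h mul0r.
rewrite mulBr (proj1 hq) sub0r iterA12 // in h1.
have p0 : p = 0.
  by move: h1; case: (odd m); rewrite ?mulNr ?opprK (proj1 hp) // => /oppr0_eq.
move: h; rewrite p0 iterA0 subr0 => q0.
by apply: subr_eq0'; rewrite -/(cm W e) hW p0 q0 subrr.
Qed.


Section DPart.
Variable D : V -> V.
Variable m : nat.
Hypothesis m1 : (0 < m)%N.
Variable G : V -> V.
Hypothesis GD : forall a b, G (a + b) = G a + G b.
Definition Psi y Y w W := iter m Am (cm Y w + cm y W) + G (cm y w).
Hypothesis KEY : forall y w, D (iter m Am (cm y w)) = Psi y (D y) w (D w).
Hypothesis Hii : forall a11 a22, peirce mul e true true a11 -> peirce mul e false false a22 ->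
          (forall x, peirce mul e false true x -> commutator mul (a11 + a22) x = 0) ->
          center mul (a11 + a22).
Hypothesis Hi : forall a11 a22, peirce mul e true true a11 -> peirce mul e false false a22 ->
          (forall x, peirce mul e true false x -> commutator mul (a11 + a22) x = 0) ->
          center mul (a11 + a22).

Lemma G0 : G 0 = 0.
Proof. by apply: (@addrI _ (G 0)); rewrite -GD !addr0. Qed.

Lemma Psi_addl y1 y2 Y1 Y2 w W :
  Psi (y1 + y2) (Y1 + Y2) w W = Psi y1 Y1 w W + Psi y2 Y2 w W.
Proof.
rewrite /Psi !cmDl GD [cm Y1 w + _ + _]addrACA (iterAD m (cm Y1 w + cm y1 W)).
by rewrite addrACA.
Qed.
Lemma Psi_addr y Y w1 w2 W1 W2 :
  Psi y Y (w1 + w2) (W1 + W2) = Psi y Y w1 W1 + Psi y Y w2 W2.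
Proof.
rewrite /Psi !cmDr GD [cm Y w1 + _ + _]addrACA (iterAD m (cm Y w1 + cm y W1)).
by rewrite addrACA.
Qed.
Lemma Psi_extra y Y Y' w W : Psi y (Y + Y') w W = Psi y Y w W + iter m Am (cm Y' w).
Proof. rewrite /Psi cmDl addrAC (iterAD m (cm Y w + cm y W)). by rewrite addrAC. Qed.
Lemma Psi_centl y Y z w W : center mul z -> Psi y (Y + z) w W = Psi y Y w W.
Proof. by move=> hz; rewrite Psi_extra hz iterA0 addr0. Qed.
Lemma Psi_centr y Y w W z : center mul z -> Psi y Y w (W + z) = Psi y Y w W.
Proof. by move=> hz; rewrite /Psi cmDr (cm_center _ hz) addr0. Qed.

Lemma D0 : D 0 = 0.
Proof.
have := KEY 0 0; rewrite cm0l iterA0 /Psi cm0l cm0r cm0l addr0 iterA0 G0 addr0.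
by [].
Qed.

Lemma iterAdm d : Pd d -> iter m Am d = 0.
Proof. by case: m m1 => // k _; apply: iterAd. Qed.

Lemma D_iter0 y w : cm y w = 0 -> Psi y (D y) w (D w) = 0.
Proof. by move=> h; rewrite -KEY h iterA0 D0. Qed.

Lemma lemM a u : Pd a -> P12 u -> exists z, center mul z /\ D (a + u) = D a + D u + z.
Proof.
move=> ha hu.
set W := D (a + u) - D a - D u.
have hDW : D (a + u) = (D a + D u) + W by apply: decomp3.
have hae : cm a e = 0 by rewrite /commutator ha subrr.
have hPd : Pd W.
  apply: (@F1 m); have := KEY (a + u) e.
  rewrite cmDl hae add0r KEY hDW Psi_extra Psi_addl (D_iter0 hae) add0r.
  exact: addr_eqr.
have hx : forall x, P21 x -> cm W x = 0.
  move=> x hx.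
  have hux : iter m Am (cm u x) = 0 by apply: iterAdm; apply: cm12_21.
  have := KEY (a + u) x.
  rewrite cmDl iterAD hux addr0 KEY hDW Psi_extra Psi_addl.
  have -> : Psi u (D u) x (D x) = 0 by rewrite -KEY hux D0.
  rewrite addr0 => /addr_eqr.
  by rewrite iterA21 //; apply: cm_d21.
have [h1 h2] := decomp hPd.
have hc := Hii (proj2 (peirce11 _) h1) (proj2 (peirce22 _) h2).
rewrite addrC subrK in hc.
exists W; split; last by [].
apply: hc => x /peirce21 hx'; exact: hx.
Qed.


Lemma lemMain a b : (P11 a /\ P11 b) \/ (P22 a /\ P22 b) ->
  exists z, center mul z /\ D (a + b) = D a + D b + z.
Proof.
move=> hab.
have hb : P11 b \/ P22 b by case: hab => [[_ h]|[_ h]]; [left|right].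
have ha : Pd a by case: hab => [[h _]|[h _]]; [apply: P11d | apply: P22d].
have hbd : Pd b by case: hb => h; [apply: P11d | apply: P22d].
set T := D (a + b) - D a - D b.
have hDT : D (a + b) = (D a + D b) + T by apply: decomp3.
have hae : cm a e = 0 by rewrite /commutator ha subrr.
have hbe : cm b e = 0 by rewrite /commutator hbd subrr.
have hPd : Pd T.
  apply: (@F1 m); have := KEY (a + b) e.
  rewrite cmDl hae hbe add0r iterA0 D0 hDT Psi_extra Psi_addl (D_iter0 hae) (D_iter0 hbe) add0r.
  by move/esym; rewrite add0r.
have hx : forall x, P12 x -> cm T x = 0.
  move=> x hx.
  set v := - cm b x.
  have hv : P12 v by apply: P12N; apply: cm_d12.
  have hvx : cm v x = 0 by rewrite /v cmNl cmbxx // oppr0.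
  have hve : cm v e = cm b x by rewrite -/(Am v) Am12 // /v opprK.
  have hed : Pd e by [].
  have [z1 [hz1 e1]] := lemM ha hv.
  have [z2 [hz2 e2]] := lemM hed hx.
  have hs : cm (a + v) (e + x) = cm (a + b) x.
    by rewrite !cmDl !cmDr hae hvx hve add0r addr0.
  have := KEY (a + v) (e + x).
  rewrite hs e1 e2 Psi_centl // Psi_centr // Psi_addl !Psi_addr.
  rewrite (D_iter0 hae) (D_iter0 hvx) add0r addr0.
  have -> : Psi v (D v) e (D e) = Psi b (D b) x (D x) by rewrite -!KEY hve.
  rewrite KEY hDT Psi_extra Psi_addl => /esym /addr_eqr.
  by move/(iterA12_eq0 (cm_d12 hPd hx)).
have [h1 h2] := decomp hPd.
have hc := Hi (proj2 (peirce11 _) h1) (proj2 (peirce22 _) h2).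
rewrite addrC subrK in hc.
exists T; split; last by [].
apply: hc => x /peirce12 hx'; exact: hx.
Qed.

End DPart.

Lemma pn_ext n (x x' : 'I_n -> V) : (forall j, x j = x' j) -> p_n mul x = p_n mul x'.
Proof. by move=> h; rewrite /p_n (eq_map h). Qed.

Lemma pn_nat n (g : nat -> V) :
  p_n mul (fun i : 'I_n.+2 => g i) = p_seq mul (cm (g 0%N) (g 1%N)) (map g (iota 2 n)).
Proof.
rewrite /p_n.
have -> : [seq g (nat_of_ord i) | i <- enum 'I_n.+2] = map g (iota 0 n.+2).
  by rewrite -val_enum_ord -map_comp.
by [].
Qed.

Lemma pseq_const s z : (forall t, t \in s -> t = e) -> p_seq mul z s = iter (size s) Am z.
Proof.
elim: s z => [//|t s IH] z h.
have -> : p_seq mul z (t :: s) = p_seq mul (cm z t) s by [].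
change (size (t :: s)) with (size s).+1.
rewrite iterSr (h t (mem_head _ _)) IH //.
by move=> t' ht'; apply: h; rewrite inE ht' orbT.
Qed.

Lemma pseq_upd c' n s z k : (k < n)%N ->
  p_seq mul z (map (fun l => if l == (s + k)%N then c' else e) (iota s n)) =
  iter (n - 1 - k) Am (cm (iter k Am z) c').
Proof.
elim: n s z k => // n IH s z [|k] hk /=.
  rewrite addn0 eqxx pseq_const.
    by rewrite size_map size_iota subn1 subn0.
  move=> t /mapP [l]; rewrite mem_iota => /andP [hl _] ->.
  by case: eqP => // hls; rewrite hls ltnn in hl.
have -> : (s == s + k.+1)%N = false.
  by apply/negbTE; rewrite -{1}[s]addn0 eqn_add2l.
have -> : map (fun l => if l == (s + k.+1)%N then c' else e) (iota s.+1 n)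
        = map (fun l => if l == (s.+1 + k)%N then c' else e) (iota s.+1 n).
  by rewrite addnS addSn.
rewrite IH // -iterS iterSr; congr (iter _ _ _).
by rewrite -subnDA add1n -subnDA addnS add1n subSS.
Qed.

Definition Gn n (D : V -> V) z :=
  \sum_(k < n) iter (n - 1 - k) Am (cm (iter k Am z) (D e)).

Lemma GnD n D a b : Gn n D (a + b) = Gn n D a + Gn n D b.
Proof.
rewrite /Gn -big_split; apply: eq_bigr => k _.
by rewrite iterAD cmDl iterAD.
Qed.

Lemma key_n n D : lie_n_derivation mul n.+2 D -> forall y w,
  D (iter n Am (cm y w)) =
  iter n Am (cm (D y) w) + (iter n Am (cm y (D w)) + Gn n D (cm y w)).
Proof.
move=> HD y w.
pose f := fun l : nat => if l == 0%N then y else if l == 1%N then w else e.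
have hf : forall l, (2 <= l)%N -> f l = e.
  by move=> [|[|l]].
have := HD (fun i : 'I_n.+2 => f i).
rewrite pn_nat /= pseq_const; last first.
  by move=> t /mapP [l]; rewrite mem_iota => /andP [hl _] ->; apply: hf.
rewrite size_map size_iota => ->.
pose h k l := if l == k then D (f l) else f l.
rewrite (eq_bigr (fun i : 'I_n.+2 => p_seq mul (cm (h i 0%N) (h i 1%N)) (map (h i) (iota 2 n)))); last first.
  move=> i _; rewrite -pn_nat; apply: pn_ext => j.
  by rewrite /h -val_eqE.
have bump0 : forall k, bump 0 k = k.+1 by move=> k; rewrite /bump leq0n add1n.
rewrite !big_ord_recl /= !bump0.
have hn : forall k l, (k < 2)%N -> l \in iota 2 n -> h k l = e.
  move=> k l hk; rewrite mem_iota => /andP [hl _]; rewrite /h.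
  case: eqP => [hlk|_]; last exact: hf.
  by move: hl; rewrite hlk leqNgt hk.
congr (_ + (_ + _)).
- rewrite pseq_const ?size_map ?size_iota //.
  by move=> t /mapP [l hl ->]; apply: hn.
- rewrite pseq_const ?size_map ?size_iota //.
  by move=> t /mapP [l hl ->]; apply: hn.
rewrite /Gn; apply: eq_bigr => i _.
have -> : map (h i.+2) (iota 2 n) = map (fun l => if l == (2 + i)%N then D e else e) (iota 2 n).
  apply/eq_in_map => l; rewrite mem_iota => /andP [hl _]; rewrite /h hf //.
by rewrite !bump0 /h /= pseq_upd.
Qed.

Lemma final_sec D
  (Hi : forall a11 a22, peirce mul e true true a11 -> peirce mul e false false a22 ->
          (forall x, peirce mul e true false x -> commutator mul (a11 + a22) x = 0) ->
          center mul (a11 + a22))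
  (Hii : forall a11 a22, peirce mul e true true a11 -> peirce mul e false false a22 ->
          (forall x, peirce mul e false true x -> commutator mul (a11 + a22) x = 0) ->
          center mul (a11 + a22))
  (HD : lie_type_derivation mul D) :
  forall (i : bool) (a b : V), peirce mul e i i a -> peirce mul e i i b ->
    exists z, center mul z /\ D (a + b) = D a + D b + z.
Proof.
have [m [G [m1 [GD KEY]]]] : exists m G, (0 < m)%N /\ (forall a b, G (a + b) = G a + G b) /\
   (forall y w, D (iter m Am (cm y w)) = Psi m G y (D y) w (D w)).
  case: HD => n [hn HDn].
  case: n hn HDn => [|[|n]] // _ HDn.
  have K := key_n HDn.
  case: n K HDn => [|k] K HDn.
    exists 1%N, (fun z => cm z (D e)); split => //; split; first by move=> a b; rewrite cmDl.
    move=> y w.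
    have K0 : forall y w, D (cm y w) = cm (D y) w + cm y (D w).
      by move=> y' w'; have := K y' w'; rewrite /= /Gn big_ord0 addr0.
    by rewrite /= /Am K0 K0 /Psi /= /Am.
  exists k.+1, (Gn k.+1 D); split => //; split; first exact: GnD.
  by move=> y w; rewrite K /Psi iterAD addrA.
have hM := @lemMain D m m1 G GD KEY Hii Hi.
case=> a b ha hb; apply: hM.
  by left; split; apply/peirce11.
by right; split; apply/peirce22.
Qed.

End Alt.

(* Index true = 1, false = 2. *)
Theorem lemma2p5 (V : zmodType) (mul : V -> V -> V) (e1 : V) (D : V -> V)
  (Hring : is_nonassoc_ring mul)
  (Halt : alternative mul)
  (He1 : nontrivial_idempotent mul e1)
  (Hi : forall a11 a22, peirce mul e1 true true a11 -> peirce mul e1 false false a22 ->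
          (forall x, peirce mul e1 true false x -> commutator mul (a11 + a22) x = 0) ->
          center mul (a11 + a22))
  (Hii : forall a11 a22, peirce mul e1 true true a11 -> peirce mul e1 false false a22 ->
          (forall x, peirce mul e1 false true x -> commutator mul (a11 + a22) x = 0) ->
          center mul (a11 + a22))
  (HD : lie_type_derivation mul D) :
  forall (i : bool) (a b : V), peirce mul e1 i i a -> peirce mul e1 i i b ->
    exists z, center mul z /\ D (a + b) = D a + D b + z.
Proof.
have He : mul e1 e1 = e1 by case: He1 => _ [].
exact: (final_sec Hring Halt He Hi Hii HD).
Qed.
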